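(* Let $q$ be a prime power with $q\equiv 1 \pmod 3$, let $\delta\in\mathbb{F}_q$ be a cubic nonresidue, and let $\mathbb{F}_q(\delta^{1/3})$ be the cubic extension with $\mathbb{F}_q$-basis $\{1,\delta^{1/3},\delta^{2/3}\}$; write $\alpha=\alpha_1+\alpha_2\delta^{1/3}+\alpha_3\delta^{2/3}$ with $\alpha_i\in\mathbb{F}_q$. Let $\mathbb{H}_q=\{(\alpha,\beta)\in \mathbb{F}_q(\delta^{1/3})^2 : \alpha_2\beta_3-\alpha_3\beta_2\neq 0\}$ with the action of $\mathrm{GL}_3(\mathbb{F}_q)$ given by \[ \begin{bmatrix} a & b & c\\ d & e & f\\ r & s & t \end{bmatrix} (\alpha,\beta) = \left(\frac{a\alpha+b\beta+c}{r\alpha+s\beta+t}, \frac{d\alpha+e\beta+f}{r\alpha+s\beta+t} \right). \] Let $B\le\mathrm{GL}_3(\mathbb{F}_q)$ be the Borel subgroup of invertible upper-triangular matrices. Then \[\{(\delta^{1/3},\,v\delta^{1/3}+\delta^{2/3}) : v\in\mathbb{F}_q\}\ \sqcup\ \{(\delta^{2/3},\,\delta^{1/3})\}\] is a fundamental domain for the action of $B$ on $\mathbb{H}_q$.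
   Context: A fundamental domain for the action of a subgroup $H$ on $\mathbb{H}_q$ is a subset of $\mathbb{H}_q$ containing exactly one element of each $H$-orbit. A cubic nonresidue is an element of $\mathbb{F}_q^\times$ that is not a cube in $\mathbb{F}_q$. *)

(* Defs.v *)
From HB Require Import structures.
From mathcomp Require Import all_boot all_order all_algebra all_field.
Set Implicit Arguments. Unset Strict Implicit. Unset Printing Implicit Defensive.
Import GRing.Theory.
Local Open Scope ring_scope.

Section Cubic.
Variables (F : fieldType) (L : fieldExtType F) (d : L).

(* the F-basis {1, delta^(1/3), delta^(2/3)} where d plays delta^(1/3) *)
Definition cbasis : 3.-tuple L := [tuple 1; d; d ^+ 2].

Definition o0 : 'I_3 := @Ordinal 3 0 isT.
Definition o1 : 'I_3 := @Ordinal 3 1 isT.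
Definition o2 : 'I_3 := @Ordinal 3 2 isT.

(* coordinates: x = x_1 + x_2 d + x_3 d^2; cc x o0 = x_1, cc x o1 = x_2, cc x o2 = x_3 *)
Definition cc (x : L) (i : 'I_3) : F := coord cbasis i x.

Definition inHq (p : L * L) : Prop :=
  cc p.1 o1 * cc p.2 o2 - cc p.1 o2 * cc p.2 o1 != 0.

Definition act (g : 'M[F]_3) (p : L * L) : L * L :=
  let den := g o2 o0 *: p.1 + g o2 o1 *: p.2 + (g o2 o2)%:A in
  ((g o0 o0 *: p.1 + g o0 o1 *: p.2 + (g o0 o2)%:A) / den,
   (g o1 o0 *: p.1 + g o1 o1 *: p.2 + (g o1 o2)%:A) / den).

Definition inBorel (g : 'M[F]_3) : Prop :=
  g \in unitmx /\ forall i j : 'I_3, (j < i)%N -> g i j = 0.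

Definition fundamental_domain (H : 'M[F]_3 -> Prop) (X D : L * L -> Prop) : Prop :=
  (forall y, D y -> X y) /\
  (forall x, X x -> exists! y, D y /\ exists g, H g /\ act g x = y).

Definition candD (y : L * L) : Prop :=
  (exists v : F, y = (d, v *: d + d ^+ 2)) \/ y = (d ^+ 2, d).

End Cubic.

(* Main.v *)
Require Import Defs.
From HB Require Import structures.
From mathcomp Require Import all_boot all_order all_algebra all_field.
From mathcomp Require Import ring.
Import GRing.Theory.
Local Open Scope ring_scope.


Lemma det_up (F : fieldType) (g : 'M[F]_3) :
  (forall i j : 'I_3, (j < i)%N -> g i j = 0) ->
  \det g = g o0 o0 * g o1 o1 * g o2 o2.
Proof.
move=> H; rewrite -det_tr det_trig; last first.
  by apply/is_trig_mxP => i j ij; rewrite mxE; apply: H.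
rewrite !big_ord_recl big_ord0 mulr1 !mxE mulrA.
have e0 : ord0 = o0 by apply: val_inj.
have e1 : lift ord0 ord0 = o1 by apply: val_inj.
have e2 : lift ord0 (lift ord0 ord0) = o2 :> 'I_3 by apply: val_inj.
by rewrite e2 e1 e0.
Qed.

Definition mat3 {F : fieldType} (a b c e f t : F) : 'M[F]_3 :=
  \matrix_(i < 3, j < 3)
    if (i == 0 :> nat) then (if (j == 0 :> nat) then a else if (j == 1 :> nat) then b else c)
    else if (i == 1 :> nat) then (if (j == 0 :> nat) then 0 else if (j == 1 :> nat) then e else f)
    else (if (j == 2 :> nat) then t else 0).

Lemma mat3_borel (F : fieldType) (a b c e f t : F) : a != 0 -> e != 0 -> t != 0 ->
  inBorel (mat3 a b c e f t).
Proof.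
move=> a0 e0 t0.
have H : forall i j : 'I_3, (j < i)%N -> mat3 a b c e f t i j = 0.
  by move=> [[|[|[|//]]] ?] [[|[|[|//]]] ?] //= _; rewrite mxE.
split=> //; rewrite unitmxE det_up // unitfE !mxE /= !mulf_neq0 //.
Qed.

Section H.
Variables (F : fieldType) (L : fieldExtType F) (d : L).
Hypothesis hbasis : basis_of fullv (cbasis d).

Definition mk (a b c : F) : L := a *: 1 + b *: d + c *: d ^+ 2.

Lemma mk_sum a b c : mk a b c = \sum_(i < 3) nth 0 [:: a; b; c] i *: (cbasis d)`_i.
Proof. by rewrite !big_ord_recl big_ord0 /= addr0 addrA. Qed.

Lemma cc_mk a b c : [/\ cc d (mk a b c) o0 = a, cc d (mk a b c) o1 = b & cc d (mk a b c) o2 = c].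
Proof.
have fr := basis_free hbasis.
by rewrite /cc mk_sum !coord_sum_free.
Qed.

Lemma mk_cc x : x = mk (cc d x o0) (cc d x o1) (cc d x o2).
Proof.
rewrite {1}(coord_basis hbasis (memvf x)) mk_sum; apply: eq_bigr => -[[|[|[|//]]] Hi] _ /=;
  by congr (_ *: _); rewrite /cc; congr coord; apply: val_inj.
Qed.

Lemma cbasis_coord (i j : 'I_3) : coord (cbasis d) j ((cbasis d)`_i) = (i == j)%:R.
Proof. exact: coord_free (basis_free hbasis). Qed.

Lemma cc1 j : coord (cbasis d) j 1 = (o0 == j)%:R.
Proof. exact: (cbasis_coord o0 j). Qed.
Lemma ccd j : coord (cbasis d) j d = (o1 == j)%:R.
Proof. exact: (cbasis_coord o1 j). Qed.
Lemma ccd2 j : coord (cbasis d) j (d ^+ 2) = (o2 == j)%:R.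
Proof. exact: (cbasis_coord o2 j). Qed.

Lemma ccZ k u i : cc d (k *: u) i = k * cc d u i.
Proof. by rewrite /cc linearZ. Qed.
Lemma ccD u v i : cc d (u + v) i = cc d u i + cc d v i.
Proof. by rewrite /cc linearD. Qed.
Lemma ccA c i : cc d (c%:A) i = c * (o0 == i)%:R.
Proof. by rewrite ccZ /cc cc1. Qed.
Lemma cc1' i : cc d 1 i = (o0 == i)%:R.
Proof. exact: cc1. Qed.
Lemma ccd' i : cc d d i = (o1 == i)%:R.
Proof. exact: ccd. Qed.
Lemma ccd2' i : cc d (d ^+ 2) i = (o2 == i)%:R.
Proof. exact: ccd2. Qed.

Lemma eq_cc u v : cc d u o0 = cc d v o0 -> cc d u o1 = cc d v o1 -> cc d u o2 = cc d v o2 -> u = v.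
Proof. by move=> h0 h1 h2; rewrite (mk_cc u) (mk_cc v) h0 h1 h2. Qed.

Lemma divA (u : L) (t : F) : u / t%:A = t^-1 *: u.
Proof. by rewrite -(fmorphV (in_alg L)) /= mulr_algr. Qed.

Lemma act_borel (g : 'M[F]_3) (x : L * L) : inBorel g ->
  act g x = ((g o2 o2)^-1 *: (g o0 o0 *: x.1 + g o0 o1 *: x.2 + (g o0 o2)%:A),
             (g o2 o2)^-1 *: (g o1 o1 *: x.2 + (g o1 o2)%:A)).
Proof.
move=> [_ H]; rewrite /act (H o2 o0) // (H o2 o1) // (H o1 o0) //.
by rewrite !scale0r !add0r !divA.
Qed.


Lemma inD : forall y, candD d y -> inHq d y.
Proof.
move=> y [[v ->]|->]; rewrite /inHq /= /cc ?linearD ?linearZ /= ?cc1 ?ccd ?ccd2 /=.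
  all: by rewrite ?(mulr0, add0r, mulr1, addr0, mul1r, mul0r, subr0, sub0r, oppr_eq0, oner_eq0).
Qed.

Lemma uniq_coords al be (g : 'M[F]_3) y : inBorel g -> act g (al, be) = y -> candD d y ->
  (cc d be o2 = 0 /\ y = (d ^+ 2, d)) \/
  (cc d be o2 != 0 /\ y = (d, (cc d be o1 / cc d be o2) *: d + d ^+ 2)).
Proof.
move=> hB; have [U H] := hB.
move: U; rewrite unitmxE det_up // unitfE !mulf_eq0 !negb_or => /andP[/andP[g00 g11] g22].
move=> hy Dy; rewrite act_borel //= in hy.
case: Dy => [[v ->]|->] in hy *; case: hy => e1 e2.
  have h1 := congr1 (fun u => cc d u o1) e2; have h2 := congr1 (fun u => cc d u o2) e2.
  rewrite /= ?(ccD, ccZ, ccA, ccd', ccd2', cc1') /= in h1 h2.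
  rewrite ?(mulr0, addr0, mul0r, add0r, mulr1) in h1 h2.
  have b3n0 : cc d be o2 != 0.
    apply/eqP => b30; move: h2; rewrite b30 !mulr0 => /eqP; by rewrite eq_sym oner_eq0.
  right; split => //; congr (_, _ *: _ + _).
  have e : cc d be o1 = cc d be o1 * ((g o2 o2)^-1 * (g o1 o1 * cc d be o2)) by rewrite h2 mulr1.
  by apply: (mulIf b3n0); rewrite divfK // e -h1; ring.
have h1 := congr1 (fun u => cc d u o1) e2; have h2 := congr1 (fun u => cc d u o2) e2.
rewrite /= ?(ccD, ccZ, ccA, ccd', ccd2', cc1') /= in h1 h2.
rewrite ?(mulr0, addr0, mul0r, add0r, mulr1) in h1 h2.
move/eqP: h2; rewrite !mulf_eq0 invr_eq0 (negbTE g22) (negbTE g11) /= => /eqP b30.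
by left.
Qed.

Lemma main : fundamental_domain (@inBorel F) (inHq d) (candD d).
Proof.
split; first exact: inD.
move=> [al be] hx; rewrite /inHq /= in hx.
have [b30|b3n0] := eqVneq (cc d be o2) 0.
  have := hx; rewrite b30 mulr0 sub0r oppr_eq0 mulf_eq0 negb_or => /andP[a3n0 b2n0].
  exists (d ^+ 2, d); split.
    split; first by right.
    pose g := mat3 (cc d al o2)^-1 (- cc d al o1 / (cc d al o2 * cc d be o1))
      (- (cc d al o0 / cc d al o2 - cc d al o1 * cc d be o0 / (cc d al o2 * cc d be o1)))
      (cc d be o1)^-1 (- cc d be o0 / cc d be o1) 1.
    have hB : inBorel g by apply: mat3_borel; rewrite ?invr_eq0 ?oner_eq0.
    exists g; split => //; rewrite act_borel // !mxE /=.
    congr pair; apply: eq_cc; rewrite ?(ccD, ccZ, ccA, ccd', ccd2', cc1') /= ?b30; field;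
      by repeat (apply/andP; split); first [exact: a3n0 | exact: b2n0 | exact: oner_neq0].
  move=> y' [Dy' [g' [Bg' Hy']]].
  case: (uniq_coords _ _ _ _ Bg' Hy' Dy') => [[_ ->]|[b3n0 _]] //.
  by rewrite b30 eqxx in b3n0.
exists (d, (cc d be o1 / cc d be o2) *: d + d ^+ 2); split.
  split; first by left; exists (cc d be o1 / cc d be o2).
  set D := cc d al o1 * cc d be o2 - cc d al o2 * cc d be o1.
  exists (mat3 (cc d be o2 / D) (- cc d al o2 / D)
      (- (cc d be o2 * cc d al o0 - cc d al o2 * cc d be o0) / D)
      (cc d be o2)^-1 (- cc d be o0 / cc d be o2) 1).
  have hB : inBorel (mat3 (cc d be o2 / D) (- cc d al o2 / D)
      (- (cc d be o2 * cc d al o0 - cc d al o2 * cc d be o0) / D)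
      (cc d be o2)^-1 (- cc d be o0 / cc d be o2) 1).
    by apply: mat3_borel; rewrite ?mulf_neq0 ?invr_eq0 ?oner_eq0.
  split => //; rewrite act_borel // !mxE /=.
  congr pair; apply: eq_cc; rewrite /D ?(ccD, ccZ, ccA, ccd', ccd2', cc1') /=; field;
    by repeat (apply/andP; split); first [exact: hx | exact: b3n0 | exact: oner_neq0].
move=> y' [Dy' [g' [Bg' Hy']]].
case: (uniq_coords _ _ _ _ Bg' Hy' Dy') => [[b30 _]|[_ ->]] //.
by rewrite b30 eqxx in b3n0.
Qed.

End H.

Theorem proposition5p2 (F : finFieldType) (delta : F)
    (hq : (#|F| %% 3 = 1)%N)
    (hdelta0 : delta != 0)
    (hnoncube : ~ exists x : F, x ^+ 3 = delta)
    (L : fieldExtType F) (d : L)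
    (hd : d ^+ 3 = delta%:A)
    (hbasis : basis_of fullv (cbasis d)) :
  fundamental_domain (@inBorel F) (inHq d) (candD d).
Proof. exact: main hbasis. Qed.
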